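(* Let $(u_n)_{n\ge0}$ be a linear recurrence sequence of order $k$ with period $M$, and let $U_1,\dots,U_M$ be the associated polynomials (defined below). If $u_{A+j\ell}=0$ for $j=0,1,\dots,k-1$, where $A\equiv a\pmod M$ with $1\le a\le M$, $A\ge0$, and $\ell>0$ is divisible by $M$, then $U_a(x,y_1,\dots,y_r)=0$ identically (in particular $u_n=0$ for all $n\ge0$ with $n\equiv a\pmod M$).
   Context: Write the sequence as $u_n=\sum_{i=1}^mg_i(n)\alpha_i^n$ with distinct nonzero characteristic roots $\alpha_i$ and polynomials $g_i$. The period $M$ is the smallest $M\ge1$ such that whenever $\alpha_1^{e_1}\cdots\alpha_m^{e_m}$ ($e_i\in\mathbb Z$) is a root of unity, it is an $M$-th root of unity. Fix a primitive $M$-th root of unity $\zeta_M$ and multiplicatively independent algebraic numbers $\gamma_1,\dots,\gamma_r$ with $\alpha_i=\zeta_M^{e_{i,0}}\gamma_1^{e_{i,1}}\cdots\gamma_r^{e_{i,r}}$ ($e_{i,j}\in\mathbb Z$). For $1\le a\le M$ put $U_a(x,y_1,\dots,y_r)=\sum_{i=1}^mg_i(x)\zeta_M^{e_{i,0}a}y_1^{e_{i,1}}\cdots y_r^{e_{i,r}}$ (a polynomial in $x$ and Laurent polynomial in the $y_j$, with terms having equal exponent vectors combined), so that $u_n=U_a(n,\gamma_1^n,\dots,\gamma_r^n)$ for every $n\equiv a\pmod M$. *)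

(* Defs.v *)
From mathcomp Require Import all_boot all_order all_algebra all_field.
Set Implicit Arguments. Unset Strict Implicit. Unset Printing Implicit Defensive.
Import Order.TTheory GRing.Theory Num.Theory.
Local Open Scope ring_scope.

Definition has_recurrence (u : nat -> algC) (k : nat) : Prop :=
  exists c : 'I_k -> algC, forall n : nat,
    u (n + k)%N = \sum_(j < k) c j * u (n + j)%N.

Definition lrs_order (u : nat -> algC) (k : nat) : Prop :=
  has_recurrence u k /\ forall k' : nat, has_recurrence u k' -> (k <= k')%N.

Definition mprod (m : nat) (alpha : 'I_m -> algC) (e : 'I_m -> int) : algC :=
  \prod_(i < m) alpha i ^ e i.

Definition period_prop (m : nat) (alpha : 'I_m -> algC) (M : nat) : Prop :=
  (0 < M)%N /\
  forall e : 'I_m -> int,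
    (exists n : nat, (0 < n)%N /\ mprod alpha e ^+ n = 1) -> mprod alpha e ^+ M = 1.

Definition is_period (m : nat) (alpha : 'I_m -> algC) (M : nat) : Prop :=
  period_prop alpha M /\ forall M' : nat, period_prop alpha M' -> (M <= M')%N.

Definition mult_indep (r : nat) (gamma : 'I_r -> algC) : Prop :=
  (forall j, gamma j != 0) /\
  forall e : 'I_r -> int, \prod_(j < r) gamma j ^ e j = 1 -> forall j, e j = 0.

(* U_a(x, y) = sum_i g_i(x) zeta^{e_{i,0} a} y^{e_i}; its coefficient (a polynomial
   in x) at the monomial y^v, after combining terms with equal exponent vectors *)
Definition U_coef (m r : nat) (g : 'I_m -> {poly algC}) (zeta : algC)
  (e0 : 'I_m -> int) (e : 'I_m -> {ffun 'I_r -> int}) (a : nat)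
  (v : {ffun 'I_r -> int}) : {poly algC} :=
  \sum_(i < m | e i == v) (zeta ^ (e0 i * a%:Z)) *: g i.

Definition U_zero (m r : nat) (g : 'I_m -> {poly algC}) (zeta : algC)
  (e0 : 'I_m -> int) (e : 'I_m -> {ffun 'I_r -> int}) (a : nat) : Prop :=
  forall v : {ffun 'I_r -> int}, U_coef g zeta e0 e a v = 0.

(* Main.v *)
Require Import Defs.
From mathcomp Require Import all_boot all_order all_algebra all_field.
From mathcomp Require Import ring zify.
Import Order.TTheory GRing.Theory Num.Theory.
Local Open Scope ring_scope.

Lemma natr_poly0 (p : {poly algC}) (c d : nat) : (0 < d)%N ->
  (forall j : nat, p.[(c + j * d)%:R] = 0) -> p = 0.
Proof.
move=> hd H; apply/eqP; apply: contraT => pn0.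
have := max_poly_roots (rs := [seq ((c + j * d)%N)%:R | j <- iota 0 (size p)]) pn0.
rewrite size_map size_iota ltnn; apply.
  by apply/allP => x /mapP [j _ ->]; apply/rootP.
rewrite map_inj_uniq ?iota_uniq // => i j /eqP.
by rewrite eqr_nat eqn_add2l eqn_pmul2r // => /eqP.
Qed.

Lemma shift_size (Q : {poly algC}) (b c : algC) :
  (size (b *: (Q \Po ('X + 1%:P)) - c *: Q)%R <= size Q)%N.
Proof.
apply: leq_trans (size_polyD _ _) _; rewrite size_polyN geq_max.
by rewrite !(leq_trans (size_scale_leq _ _)) // size_comp_poly2 // size_XaddC.
Qed.

Lemma shift_coef (Q : {poly algC}) (b c : algC) :
  (b *: (Q \Po ('X + 1%:P)) - c *: Q)`_(size Q).-1 = (b - c) * lead_coef Q.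
Proof.
rewrite coefD coefN !coefZ.
have -> : (Q \Po ('X + 1%:P))`_(size Q).-1 = lead_coef Q.
  rewrite -(size_comp_poly2 Q (size_XaddC 1)).
  by rewrite -/(lead_coef _) lead_coef_comp ?size_XaddC // lead_coefXaddC expr1n mulr1.
by rewrite /lead_coef mulrBl.
Qed.

Lemma shift_lt (Q : {poly algC}) (b : algC) : Q != 0 ->
  (size (b *: (Q \Po ('X + 1%:P)) - b *: Q)%R < size Q)%N.
Proof.
move=> Qn0; rewrite ltn_neqAle shift_size andbT; apply/eqP => E.
have : lead_coef (b *: (Q \Po ('X + 1%:P)) - b *: Q) = 0.
  by rewrite /lead_coef E shift_coef subrr mul0r.
move/eqP; rewrite lead_coef_eq0 => /eqP E0.
by move: E; rewrite E0 size_poly0 => /esym/eqP; rewrite size_poly_eq0 (negbTE Qn0).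
Qed.

Lemma shift_nz (Q : {poly algC}) (b c : algC) : b != c -> Q != 0 ->
  b *: (Q \Po ('X + 1%:P)) - c *: Q != 0.
Proof.
move=> bc Qn0; apply/eqP => E.
have := shift_coef Q b c; rewrite E coef0 => /esym/eqP.
by rewrite mulf_eq0 subr_eq0 (negbTE bc) lead_coef_eq0 (negbTE Qn0).
Qed.

Lemma gpsum_indep (T : eqType) (beta : T -> algC) : forall (s : seq T) (Q : T -> {poly algC}),
  uniq s -> {in s &, injective beta} -> (forall t, t \in s -> beta t != 0) ->
  (forall j : nat, \sum_(t <- s) (Q t).[j%:R] * beta t ^+ j = 0) ->
  forall t, t \in s -> Q t = 0.
Proof.
move=> s Q us binj bnz H.
move: {2}(\sum_(t <- s) (size (Q t)).+1)%N (leqnn (\sum_(t <- s) (size (Q t)).+1)%N) => N.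
elim: N s Q us binj bnz H => [|N IH] [|t0 s] Q us binj bnz H hN //.
  by move: hN; rewrite big_cons.
move: us => /= /andP [t0s us].
have binjs : {in s &, injective beta}.
  by move=> x y xs ys; apply: binj; rewrite inE ?xs ?ys orbT.
have bnzs : forall t, t \in s -> beta t != 0.
  by move=> x xs; apply: bnz; rewrite inE xs orbT.
move: hN; rewrite big_cons => hN.
have [Q0|Q0] := eqVneq (Q t0) 0.
  have Ht : forall j : nat, \sum_(t <- s) (Q t).[j%:R] * beta t ^+ j = 0.
    by move=> j; have := H j; rewrite big_cons Q0 horner0 mul0r add0r.
  have IHs := IH s Q us binjs bnzs Ht ltac:(lia).
  by move=> t; rewrite inE => /orP [/eqP -> | /IHs].
pose Q' t := beta t *: (Q t \Po ('X + 1%:P)) - beta t0 *: Q t.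
have H' : forall j : nat, \sum_(t <- t0 :: s) (Q' t).[j%:R] * beta t ^+ j = 0.
  move=> j.
  rewrite (eq_bigr (fun t => (Q t).[(j.+1)%:R] * beta t ^+ j.+1
                            - beta t0 * ((Q t).[j%:R] * beta t ^+ j))); last first.
    move=> t _; rewrite /Q' hornerD hornerN !hornerZ horner_comp hornerD hornerX hornerC.
    rewrite -natr1 exprS; ring.
  by rewrite sumrB -mulr_sumr !H mulr0 subrr.
have hsz : (\sum_(t <- t0 :: s) (size (Q' t)).+1 <= N)%N.
  rewrite big_cons.
  have h1 := @shift_lt (Q t0) (beta t0) Q0.
  have h2 : (\sum_(t <- s) (size (Q' t)).+1 <= \sum_(t <- s) (size (Q t)).+1)%N.
    by apply: leq_sum => t _; rewrite ltnS shift_size.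
  rewrite /Q' in h2 *; lia.
have IHs := IH (t0 :: s) Q' ltac:(by rewrite /= t0s us) binj bnz H' hsz.
have Qs : forall t, t \in s -> Q t = 0.
  move=> t ts; apply/eqP; apply: contraT => Qt.
  have bt : beta t != beta t0.
    apply: contraNneq t0s => E.
    have -> : t0 = t by apply: binj; rewrite ?inE ?ts ?eqxx ?orbT.
    exact: ts.
  have tin : t \in t0 :: s by rewrite inE ts orbT.
  have := IHs t tin; move/eqP; by rewrite (negbTE (@shift_nz (Q t) _ _ bt Qt)).
have Qt0 : Q t0 = 0.
  apply: (@natr_poly0 _ 0 1) => // j.
  have := H (0 + j * 1)%N; rewrite big_cons big1_seq ?addr0; last first.
    by move=> t /andP [_ ts]; rewrite Qs // horner0 mul0r.
  move/eqP; rewrite mulf_eq0 expf_eq0 (negbTE (bnz t0 _)) ?inE ?eqxx // andbF orbF.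
  by move/eqP.
by move=> t; rewrite inE => /orP [/eqP -> | /Qs].
Qed.

Lemma rec_sub (u : nat -> algC) (k A l : nat) : has_recurrence u k ->
  (forall j : nat, (j < k)%N -> u (A + j * l)%N = 0) -> forall j : nat, u (A + j * l)%N = 0.
Proof.
case=> c Hc Hz j; case: k c Hc Hz => [|k'] c Hc Hz.
  by have := Hc (A + j * l)%N; rewrite big_ord0 addn0.
pose K := k'.+1.
pose C : 'M[algC]_K := \matrix_(p, i) if (i.+1 < K)%N then ((p : nat) == i.+1)%:R else c p.
pose X n : 'rV[algC]_K := \row_(i < K) u (n + i)%N.
have HX1 : forall n, X n *m C = X n.+1.
  move=> n; apply/rowP => i; rewrite !mxE.
  under eq_bigr do rewrite !mxE.
  case hi : (i.+1 < K)%N.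
    rewrite (bigD1 (Ordinal hi)) //= eqxx mulr1 big1 ?addr0 ?addnS //.
    move=> p hp; have -> : (p == i.+1 :> nat) = false.
      by apply/negbTE; apply: contra hp => /eqP E; apply/eqP; apply: val_inj.
    by rewrite mulr0.
  have ik : i = k' :> nat by have := ltn_ord i; rewrite /K in hi *; lia.
  rewrite ik addSnnS Hc; apply: eq_bigr => p _; exact: mulrC.
have HXn : forall n, X n = X 0 *m C ^+ n.
  elim=> [|n IHn]; first by rewrite expr0 mulmx1.
  by rewrite -HX1 IHn exprSr -mulmxA.
pose B := C ^+ l; pose Y := X 0 *m C ^+ A.
have Hv : forall j, u (A + j * l)%N = (Y *m B ^+ j) 0 0.
  move=> i; rewrite /Y -mulmxA.
  have -> : C ^+ A *m B ^+ i = C ^+ (A + i * l)%N by rewrite mulnC exprD exprM.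
  by rewrite -HXn mxE addn0.
pose p := char_poly B.
have CH : \sum_(t < size p) p`_t *: B ^+ t = 0.
  transitivity (horner_mx B p); last exact: Cayley_Hamilton.
  symmetry; rewrite -[X in horner_mx B X]coefK poly_def rmorph_sum.
  apply: eq_bigr => t _; by rewrite -mul_polyC rmorphM rmorphXn /= horner_mx_C horner_mx_X -mul_scalar_mx.
have E : forall j, \sum_(t < size p) p`_t * u (A + (j + t) * l)%N = 0.
  move=> i.
  have : (Y *m B ^+ i *m (\sum_(t < size p) p`_t *: B ^+ t)) 0 0 = 0.
    by rewrite CH mulmx0 mxE.
  rewrite mulmx_sumr summxE => H0; apply: etrans _ H0; apply: eq_bigr => t _.
  have BB : B ^+ i *m B ^+ t = B ^+ (i + t) by rewrite exprD.
  rewrite Hv; transitivity ((p`_t *: (Y *m B ^+ (i + t))) 0 0); first by rewrite [in RHS]mxE.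
  by rewrite exprD scalemxAr -mulmxA -[in RHS]scalemxAr.
have Hall : forall n i, (i < n + K)%N -> u (A + i * l)%N = 0.
  elim=> [|n IHn] i hi; first exact: Hz.
  have [hl|hge] := ltnP i (n + K); first exact: IHn.
  have ie : i = (n + K)%N by lia.
  have := E n; rewrite size_char_poly big_ord_recr /=.
  rewrite big1 ?add0r; last by move=> t _; rewrite IHn ?mulr0 //; have := ltn_ord t; lia.
  have -> : p`_K = 1 by have := char_poly_monic B; move/monicP; rewrite /lead_coef size_char_poly.
  by rewrite mul1r ie.
by apply: (Hall j); rewrite /K; lia.
Qed.

Theorem corollary4
  (u : nat -> algC) (k : nat)
  (m : nat) (alpha : 'I_m -> algC) (g : 'I_m -> {poly algC})
  (Halpha_nz : forall i, alpha i != 0)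
  (Halpha_inj : injective alpha)
  (Hg_nz : forall i, g i != 0)
  (Hu : forall n : nat, u n = \sum_(i < m) (g i).[n%:R] * alpha i ^+ n)
  (Hk : lrs_order u k)
  (M : nat) (HM : is_period alpha M)
  (zeta : algC) (Hzeta : M.-primitive_root zeta)
  (r : nat) (gamma : 'I_r -> algC) (Hgamma : mult_indep gamma)
  (e0 : 'I_m -> int) (e : 'I_m -> {ffun 'I_r -> int})
  (Hdec : forall i, alpha i = zeta ^ e0 i * \prod_(j < r) gamma j ^ e i j)
  (a A l : nat)
  (Ha : (1 <= a <= M)%N) (HA : A = a %[mod M])
  (Hl : (0 < l)%N) (HMl : (M %| l)%N)
  (Hzeros : forall j : nat, (j < k)%N -> u (A + j * l)%N = 0) :
  U_zero g zeta e0 e a /\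
  (forall n : nat, n = a %[mod M] -> u n = 0).
Proof.
pose Gam (w : {ffun 'I_r -> int}) := \prod_(j < r) gamma j ^ w j.
have gnz : forall j, gamma j != 0 by case: Hgamma.
have Gnz : forall w, Gam w != 0.
  by move=> w; apply/prodf_neq0 => j _; apply: expfz_neq0.
have zM : zeta ^+ M = 1 := prim_expr_order Hzeta.
have key : forall n : nat, n = a %[mod M] -> forall i,
    alpha i ^+ n = zeta ^ (e0 i * a%:Z) * Gam (e i) ^+ n.
  move=> n hn i; rewrite Hdec exprMn; congr (_ * _).
  have z1 : (zeta ^ e0 i) ^+ M = 1.
    have -> : (zeta ^ e0 i) ^+ M = (zeta ^ e0 i) ^ (M%:Z) by [].
    by rewrite exprz_exp mulrC -exprz_exp (_ : zeta ^ M%:Z = 1) ?exp1rz...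
  rewrite -(expr_mod n z1) hn (expr_mod a z1).
  by rewrite -exprz_exp.
pose S := undup [seq e i | i <- enum 'I_m].
have uS : uniq S := undup_uniq _.
have eS : forall i, e i \in S by move=> i; rewrite mem_undup map_f ?mem_enum.
have group : forall n : nat, n = a %[mod M] ->
    u n = \sum_(w <- S) (U_coef g zeta e0 e a w).[n%:R] * Gam w ^+ n.
  move=> n hn; rewrite Hu.
  pose G i w := zeta ^ (e0 i * a%:Z) * (g i).[n%:R] * Gam w ^+ n.
  transitivity (\sum_(i < m) \sum_(w <- S) (if e i == w then G i w else 0)).
    apply: eq_bigr => i _.
    rewrite (bigD1_seq (e i)) //= eqxx big1 ?addr0; last first.
      by move=> w /negbTE; rewrite eq_sym => ->.
    by rewrite key // /G; ring.
  rewrite exchange_big /=; apply: eq_bigr => w _.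
  rewrite /U_coef horner_sum mulr_suml [RHS]big_mkcond /=; apply: eq_bigr => i _.
  by case: eqP => // <-; rewrite hornerZ /G.
have Uz : U_zero g zeta e0 e a.
  move=> w.
  have [wS|wnS] := boolP (w \in S); last first.
    rewrite /U_coef big_pred0 // => i; apply/negbTE; apply: contra wnS => /eqP <-.
    exact: eS.
  pose Q w := Gam w ^+ A *: (U_coef g zeta e0 e a w \Po (l%:R *: 'X + (A%:R)%:P)).
  have Hv : forall j : nat,
      \sum_(w <- S) (Q w).[j%:R] * (Gam w ^+ l) ^+ j = 0.
    move=> j.
    have hj : (A + j * l)%N = a %[mod M].
      have h0 : ((j * l) %% M = 0)%N by apply/eqP; rewrite -/(dvdn M (j * l)) dvdn_mull.
      by rewrite -modnDmr h0 addn0 HA.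
    apply: etrans (@rec_sub u k A l Hk.1 Hzeros j); rewrite (group _ hj); apply: eq_bigr => v _.
    rewrite /Q hornerZ horner_comp hornerD hornerZ hornerX hornerC.
    rewrite -exprM exprD natrD natrM [(j * l)%N]mulnC; rewrite [A%:R + _]addrC [j%:R * _]mulrC; ring.
  have binj : {in S &, injective (fun w => Gam w ^+ l)}.
    move=> x y _ _ /= Exy; apply/ffunP => j.
    pose ev := fun j => (x j - y j) * l%:Z.
    have H1 : \prod_(j < r) gamma j ^ ev j = 1.
      transitivity (\prod_(j < r) (gamma j ^ x j / gamma j ^ y j) ^+ l).
        apply: eq_bigr => i _; rewrite /ev -exprz_exp expfzDr // invr_expz.
        by [].
      rewrite prodrXl prodf_div expr_div_n -/(Gam x) -/(Gam y) Exy divff //.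
      by rewrite expf_neq0.
    have := (proj2 Hgamma) ev H1 j; rewrite /ev => /eqP.
    rewrite mulf_eq0 subr_eq0 => /orP [/eqP //|].
    by move=> /eqP [] l0; move: Hl; rewrite l0.
  have bnz : forall w, w \in S -> Gam w ^+ l != 0 by move=> v _; rewrite expf_neq0.
  have Qw := @gpsum_indep _ _ S Q uS binj bnz Hv w wS.
  apply: (@natr_poly0 _ A l Hl) => j.
  have := congr1 (fun q => q.[j%:R]) Qw; rewrite /= /Q hornerZ horner_comp horner0.
  move/eqP; rewrite mulf_eq0 expf_eq0 (negbTE (Gnz w)) andbF /=.
  rewrite hornerD hornerZ hornerX hornerC natrD natrM mulrC addrC => /eqP.
  by [].
split=> // n hn; rewrite (group n hn) big1_seq // => w _.
by rewrite Uz horner0 mul0r.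
Qed.
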